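(* Let $\mathcal{X}\subseteq\mathbb{R}^d$ be closed convex, $\mathcal{Z}$ a set, $f:\mathcal{X}\times\mathcal{Z}\to\mathbb{R}$ with $f(\cdot,z)$ convex and $L$-Lipschitz for all $z$, and $S=(z_1,\dots,z_n)\in\mathcal{Z}^n$ with $F_S(x)=\frac1n\sum_{i=1}^nf(x,z_i)$ and minimizer $x^*(S)\in\arg\min_{x\in\mathcal{X}}F_S(x)$. Let $\pi$ be an arbitrary permutation of $[n]$ and run fixed-permutation SGD for $K$ epochs with step size constant within each epoch: from $x^1_1=x^1\in\mathcal{X}$, $x^k_1=x^{k-1}_{n+1}$ for $k\ge2$ and $x^k_{t+1}=\mathsf{Proj}_{\mathcal{X}}(x^k_t-\eta_k\nabla f(x^k_t,z_{\pi(t)}))$ for $t=1,\dots,n$, with $\eta_k>0$; output $\bar x^K=\frac{1}{\sum_{k=1}^K\eta_k}\sum_{k=1}^K\eta_kx^k_1$. Then $$F_S(\bar x^K)-F_S(x^*(S))\le\frac{\|x^1-x^*(S)\|^2}{2n\sum_{k}\eta_k}+\frac{L^2(n+2)}{2}\cdot\frac{\sum_k\eta_k^2}{\sum_k\eta_k}.$$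
   Context: $\|\cdot\|$ is the Euclidean norm and $\mathsf{Proj}_{\mathcal{X}}$ the Euclidean projection; $\nabla f(x,z)$ is a fixed selection of a subgradient of $f(\cdot,z)$ at $x$, assumed to have norm at most $L$ (Lipschitz on an open set containing $\mathcal{X}$). Sums over $k$ range over $k=1,\dots,K$. *)

(* Defs.v *)
From HB Require Import structures.
From mathcomp Require Import all_boot all_order all_algebra all_fingroup.
From mathcomp Require Import all_classical all_reals all_analysis.
Set Implicit Arguments. Unset Strict Implicit. Unset Printing Implicit Defensive.
Import Order.TTheory GRing.Theory Num.Theory.
Import numFieldNormedType.Exports.
Local Open Scope classical_set_scope.
Local Open Scope ring_scope.

Section Defs.
Variables (R : realType) (d : nat).
Notation vec := 'rV[R]_d.

Definition dotv (u v : vec) : R := \sum_(i < d) u 0 i * v 0 i.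
Definition enorm (u : vec) : R := Num.sqrt (dotv u u).

Definition convex_on (X : set vec) (h : vec -> R) : Prop :=
  forall x y t, X x -> X y -> 0 <= t <= 1 ->
    h ((1 - t) *: x + t *: y) <= (1 - t) * h x + t * h y.

Definition is_proj (X : set vec) (y p : vec) : Prop :=
  X p /\ forall x, X x -> enorm (y - p) <= enorm (y - x).

Definition emp_risk (Z : Type) (n : nat) (f : vec -> Z -> R) (z : 'I_n -> Z)
  (x : vec) : R := n%:R^-1 * \sum_(i < n) f x (z i).

Definition sgd_epoch (Z : Type) (n : nat) (proj : vec -> vec)
  (g : vec -> Z -> vec) (z : 'I_n -> Z) (pi : 'S_n) (et : R) (x : vec) : vec :=
  foldl (fun x t => proj (x - et *: g x (z (pi t)))) x (enum 'I_n).

(* sgd_start ... k = x^{k+1}_1 : start of epoch k+1 (x^1_1 = x1),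
   step sizes eta indexed from 1 (eta k = eta_k). *)
Fixpoint sgd_start (Z : Type) (n : nat) (proj : vec -> vec)
  (g : vec -> Z -> vec) (z : 'I_n -> Z) (pi : 'S_n) (eta : nat -> R)
  (x1 : vec) (k : nat) : vec :=
  match k with
  | 0 => x1
  | k'.+1 => sgd_epoch proj g z pi (eta k) (sgd_start proj g z pi eta x1 k')
  end.

Definition sgd_avg (Z : Type) (n : nat) (proj : vec -> vec)
  (g : vec -> Z -> vec) (z : 'I_n -> Z) (pi : 'S_n) (eta : nat -> R)
  (x1 : vec) (K : nat) : vec :=
  (\sum_(1 <= k < K.+1) eta k)^-1 *:
    \sum_(1 <= k < K.+1) (eta k *: sgd_start proj g z pi eta x1 k.-1).
End Defs.

(* Main.v *)
Require Import Defs.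
From HB Require Import structures.
From mathcomp Require Import all_boot all_order all_algebra all_fingroup.
From mathcomp Require Import all_classical all_reals all_analysis.
From mathcomp Require Import ring lra.
Import Order.TTheory GRing.Theory Num.Theory.
Import numFieldNormedType.Exports.
Local Open Scope classical_set_scope.
Local Open Scope ring_scope.
Set Implicit Arguments. Unset Strict Implicit.

Section Vec.
Variables (R : realType) (d : nat).
Local Notation vec := 'rV[R]_d.

Definition sq (u : vec) := dotv u u.

Lemma dotvC (u v : vec) : dotv u v = dotv v u.
Proof. by rewrite /dotv; apply: eq_bigr => i _; rewrite mulrC. Qed.

Lemma dotvDr (u v w : vec) : dotv u (v + w) = dotv u v + dotv u w.
Proof. by rewrite /dotv -big_split; apply: eq_bigr => i _; rewrite mxE mulrDr. Qed.

Lemma dotvZr (u v : vec) a : dotv u (a *: v) = a * dotv u v.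
Proof. by rewrite /dotv mulr_sumr; apply: eq_bigr => i _; rewrite mxE mulrCA. Qed.

Lemma dotv0r (u : vec) : dotv u 0 = 0.
Proof. by rewrite /dotv big1 // => i _; rewrite mxE mulr0. Qed.

Lemma dotvNr (u v : vec) : dotv u (- v) = - dotv u v.
Proof. by rewrite -scaleN1r dotvZr mulN1r. Qed.

Lemma dotvBr (u v w : vec) : dotv u (v - w) = dotv u v - dotv u w.
Proof. by rewrite dotvDr dotvNr. Qed.

Lemma dotvDl (u v w : vec) : dotv (v + w) u = dotv v u + dotv w u.
Proof. by rewrite dotvC dotvDr !(dotvC u). Qed.

Lemma dotvZl (u v : vec) a : dotv (a *: v) u = a * dotv v u.
Proof. by rewrite dotvC dotvZr dotvC. Qed.

Lemma dotvNl (u v : vec) : dotv (- v) u = - dotv v u.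
Proof. by rewrite dotvC dotvNr dotvC. Qed.

Lemma dotvBl (u v w : vec) : dotv (v - w) u = dotv v u - dotv w u.
Proof. by rewrite dotvDl dotvNl. Qed.

Lemma dotv_sumr (u : vec) I (r : seq I) (P : pred I) (F : I -> vec) :
  dotv u (\sum_(i <- r | P i) F i) = \sum_(i <- r | P i) dotv u (F i).
Proof. exact: (big_morph _ (dotvDr u) (dotv0r u)). Qed.

Lemma sq_ge0 (u : vec) : 0 <= sq u.
Proof. by rewrite /sq /dotv sumr_ge0 // => i _; rewrite -expr2 sqr_ge0. Qed.

Lemma enorm_ge0 (u : vec) : 0 <= enorm u.
Proof. exact: sqrtr_ge0. Qed.

Lemma enorm_sq (u : vec) : enorm u ^+ 2 = sq u.
Proof. by rewrite /enorm sqr_sqrtr // sq_ge0. Qed.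

Lemma sqD (u v : vec) : sq (u + v) = sq u + 2 * dotv u v + sq v.
Proof. rewrite /sq dotvDl !dotvDr (dotvC v u); ring. Qed.

Lemma sqB (u v : vec) : sq (u - v) = sq u - 2 * dotv u v + sq v.
Proof. rewrite /sq dotvBl !dotvBr (dotvC v u); ring. Qed.

Lemma sqN (u : vec) : sq (- u) = sq u.
Proof. by rewrite /sq dotvNl dotvNr opprK. Qed.

Lemma sqZ (u : vec) a : sq (a *: u) = a ^+ 2 * sq u.
Proof. rewrite /sq dotvZl dotvZr; ring. Qed.

Lemma le_sq_nn (x y : R) : 0 <= x -> 0 <= y -> x ^+ 2 <= y ^+ 2 -> x <= y.
Proof. move=> x0 y0 h; nra. Qed.

Lemma cs_sq (u v : vec) : dotv u v ^+ 2 <= sq u * sq v.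
Proof.
have key t : 0 <= sq u - 2 * t * dotv u v + t ^+ 2 * sq v.
  by have := sq_ge0 (u - t *: v); rewrite sqB dotvZr sqZ mulrA.
have [A0|Apos] := eqVneq (sq v) 0.
  have [B0|Bn0] := eqVneq (dotv u v) 0; first by rewrite B0 A0; lra.
  have := key ((sq u + 1) / (2 * dotv u v)).
  rewrite A0 mulr0 addr0.
  have -> : 2 * ((sq u + 1) / (2 * dotv u v)) * dotv u v = sq u + 1.
    by field.
  lra.
have Ap : 0 < sq v by rewrite lt_neqAle eq_sym Apos sq_ge0.
have := key (dotv u v / sq v).
set B := dotv u v; set A := sq v; set C := sq u => h.
have e : C - 2 * (B / A) * B + (B / A) ^+ 2 * A = (C * A - B ^+ 2) / A.
  by field.
rewrite e in h.
have : 0 <= (C * A - B ^+ 2) / A * A by rewrite mulr_ge0 // ltW.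
rewrite divfK //; lra.
Qed.

Lemma cs (u v : vec) : dotv u v <= enorm u * enorm v.
Proof.
have := cs_sq u v; rewrite -!enorm_sq => h.
have [B0|B0] := leP (dotv u v) 0.
  by apply: le_trans B0 _; rewrite mulr_ge0 ?enorm_ge0.
apply: le_sq_nn; [exact: ltW | by rewrite mulr_ge0 ?enorm_ge0 | by rewrite exprMn].
Qed.

Lemma cs' (u v : vec) : - (enorm u * enorm v) <= dotv u v.
Proof.
have := cs (- u) v; rewrite dotvNl.
have -> : enorm (- u) = enorm u by rewrite /enorm -/(sq _) sqN.
lra.
Qed.

Lemma enormD (u v : vec) : enorm (u + v) <= enorm u + enorm v.
Proof.
apply: le_sq_nn; rewrite ?addr_ge0 ?enorm_ge0 //.
rewrite enorm_sq sqD -!enorm_sq.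
have := cs u v; lra.
Qed.

Lemma enorm0 : enorm (0 : vec) = 0.
Proof. by rewrite /enorm dotv0r sqrtr0. Qed.

End Vec.
Section Proj.
Variables (R : realType) (d : nat).
Local Notation vec := 'rV[R]_d.

Lemma convX (X : set vec) (cX : convex_set X) x y (t : R) :
  X x -> X y -> 0 <= t <= 1 -> X (t *: x + (1-t) *: y).
Proof.
move=> Xx Xy /andP[t0 t1].
have P : Itv.num_sem `[0%Z, 1%Z] t.
  by rewrite /Itv.num_sem /= in_itv /= ger0_real // t0 t1.
have := cX x y (@Itv.mk _ _ (Itv.Real `[0%Z, 1%Z]) t P).
rewrite !inE => /(_ Xx Xy).
done.
Qed.

Lemma sq_le (a b : R) : 0 <= a -> a <= b -> a ^+ 2 <= b ^+ 2.
Proof. move=> a0 ab; nra. Qed.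

Lemma proj_nonexp (X : set vec) (cX : convex_set X) y p a :
  is_proj X y p -> X a -> sq (p - a) <= sq (y - a).
Proof.
case=> Xp hp Xa.
have hsq x : X x -> sq (y - p) <= sq (y - x).
  by move=> Xx; rewrite -!enorm_sq; apply: sq_le; [exact: enorm_ge0| exact: hp].
set c := dotv (y - p) (a - p); set m := sq (a - p).
have m0 : 0 <= m := sq_ge0 (a - p).
have c_le0 : c <= 0.
  rewrite leNgt; apply/negP => cpos.
  have cm : 0 < c + m by lra.
  set t := c / (c + m).
  have tcm : t * (c + m) = c by rewrite /t divfK // gt_eqF.
  have t0 : 0 < t by rewrite /t divr_gt0.
  have t1 : t <= 1 by rewrite /t ler_pdivrMr // mul1r; lra.
  have Xt : X (t *: a + (1 - t) *: p) by apply: convX => //; rewrite ltW.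
  have := hsq _ Xt.
  have -> : y - (t *: a + (1 - t) *: p) = (y - p) - t *: (a - p).
    by apply/rowP => i; rewrite !mxE; ring.
  rewrite [X in _ <= X]sqB dotvZr sqZ -/c -/m => h.
  have e2 : t * (t * (c + m)) = t * c by rewrite tcm.
  nra.
have -> : y - a = (y - p) - (a - p) by apply/rowP => i; rewrite !mxE; ring.
have -> : p - a = - (a - p) by rewrite opprB.
rewrite sqN [X in _ <= X]sqB -/c -/m.
have := sq_ge0 (y - p); lra.
Qed.

End Proj.
Section Main.
Variables (R : realType) (d : nat) (X : set 'rV[R]_d) (Z : Type)
  (f : 'rV[R]_d -> Z -> R) (g : 'rV[R]_d -> Z -> 'rV[R]_d) (L : R)
  (n : nat) (z : 'I_n -> Z) (proj : 'rV[R]_d -> 'rV[R]_d) (pi : 'S_n).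
Hypothesis cX : convex_set X.
Hypothesis hproj : forall y, is_proj X y (proj y).
Hypothesis hsub : forall zz x y, X x -> X y -> f y zz >= f x zz + dotv (g x zz) (y - x).
Hypothesis hgL : forall zz x, X x -> enorm (g x zz) <= L.

Lemma one_step zz x x1 xs (et r : R) : X x -> X x1 -> X xs -> 0 <= et ->
  enorm (x - x1) <= r ->
  enorm (proj (x - et *: g x zz) - x) <= et * L /\
  sq (proj (x - et *: g x zz) - xs) <= sq (x - xs) - 2 * et * (f x1 zz - f xs zz)
     + 2 * et * L * r + et ^+ 2 * L ^+ 2.
Proof.
move=> Xx Xx1 Xxs et0 hr.
have L0 : 0 <= L := le_trans (enorm_ge0 _) (hgL zz Xx).
set gx := g x zz.
have hg : sq gx <= L ^+ 2.
  by rewrite -enorm_sq; apply: sq_le; [exact: enorm_ge0 | exact: hgL].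
split.
  apply: le_sq_nn; [exact: enorm_ge0 | exact: mulr_ge0 | ].
  rewrite enorm_sq; apply: le_trans (proj_nonexp cX (hproj _) Xx) _.
  have -> : x - et *: gx - x = - (et *: gx) by apply/rowP => i; rewrite !mxE; ring.
  rewrite sqN sqZ exprMn; apply: ler_wpM2l => //; exact: sqr_ge0.
apply: le_trans (proj_nonexp cX (hproj _) Xxs) _.
have -> : x - et *: gx - xs = (x - xs) - et *: gx by apply/rowP => i; rewrite !mxE; ring.
rewrite [sq (x - xs - _)]sqB dotvZr sqZ.
have h1 := hsub zz Xx Xxs.
have h2 := hsub zz Xx1 Xx.
have h3 := cs' (g x1 zz) (x - x1).
have h4 : enorm (g x1 zz) * enorm (x - x1) <= L * r.
  by apply: ler_pM => //; [exact: enorm_ge0 | exact: enorm_ge0 | exact: hgL].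
have e : dotv gx (xs - x) = - dotv (x - xs) gx.
  by rewrite dotvC -dotvNl opprB.
rewrite -/gx e in h1.
have h5 : et * (- dotv (x - xs) gx) <= et * (f xs zz - f x1 zz + L * r).
  by apply: ler_wpM2l => //; lra.
have h6 : et ^+ 2 * sq gx <= et ^+ 2 * L ^+ 2.
  by apply: ler_wpM2l => //; exact: sqr_ge0.
lra.
Qed.

Lemma epoch_fold (et : R) x1 xs : 0 <= et -> X x1 -> X xs ->
  forall (s : seq 'I_n) x (m : nat), X x -> enorm (x - x1) <= m%:R * et * L ->
  let y := foldl (fun x t => proj (x - et *: g x (z (pi t)))) x s in
  [/\ X y, enorm (y - x1) <= (m + size s)%:R * et * L &
   sq (y - xs) <= sq (x - xs)
     - 2 * et * \sum_(t <- s) (f x1 (z (pi t)) - f xs (z (pi t)))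
     + et ^+ 2 * L ^+ 2 * ((m + size s)%:R ^+ 2 - m%:R ^+ 2)].
Proof.
move=> et0 X1 Xs; elim=> [|t s IH] x m Xx hx /=.
  by rewrite big_nil addn0 subrr !mulr0 subr0 addr0.
have [h1 h2] := one_step (z (pi t)) Xx X1 Xs et0 hx.
set x' := proj _ in h1 h2.
have Xx' : X x' by case: (hproj (x - et *: g x (z (pi t)))).
have hx' : enorm (x' - x1) <= m.+1%:R * et * L.
  have -> : x' - x1 = (x' - x) + (x - x1) by apply/rowP => i; rewrite !mxE; ring.
  apply: le_trans (enormD _ _) _.
  rewrite -natr1; lra.
have [IH1 IH2 IH3] := IH x' m.+1 Xx' hx'.
rewrite -addSnnS; split => //.
apply: le_trans IH3 _.
rewrite big_cons.
move: h2; rewrite -/x' !natrD -natr1.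
set M := m%:R; set k := (size s)%:R.
move=> h2.
nra.
Qed.

Definition G x := \sum_(i < n) f x (z i).

Lemma epoch (et : R) x1 xs : 0 <= et -> X x1 -> X xs ->
  X (sgd_epoch proj g z pi et x1) /\
  sq (sgd_epoch proj g z pi et x1 - xs) <= sq (x1 - xs)
     - 2 * et * (G x1 - G xs) + et ^+ 2 * L ^+ 2 * n%:R ^+ 2.
Proof.
move=> et0 X1 Xs.
have := @epoch_fold et x1 xs et0 X1 Xs (enum 'I_n) x1 0 X1.
rewrite subrr enorm0 !mul0r lexx => /(_ isT) [h1 _ h3]; split => //.
move: h3; rewrite add0n size_enum_ord expr0n /= subr0.
rewrite big_enum /= sumrB.
have hs (F : 'I_n -> R) : \sum_(i in 'I_n) F (pi i) = \sum_(i < n) F i.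
  by rewrite [RHS](reindex_inj (@perm_inj _ pi)).
by rewrite /G (hs (fun i => f x1 (z i))) (hs (fun i => f xs (z i))).
Qed.


Lemma start_in (eta : nat -> R) x1 K : X x1 -> (forall k, (1 <= k <= K)%N -> 0 < eta k) ->
  forall k, (k <= K)%N -> X (sgd_start proj g z pi eta x1 k).
Proof.
move=> X1 he; elim=> [|k IH] hk //=.
have hk' : (k <= K)%N by apply: ltnW.
have e0 : 0 <= eta k.+1 by apply/ltW/he; rewrite hk.
by case: (@epoch (eta k.+1) (sgd_start proj g z pi eta x1 k) x1 e0 (IH hk') X1).
Qed.

Lemma telescope (eta : nat -> R) x1 xs K : X x1 -> X xs ->
  (forall k, (1 <= k <= K)%N -> 0 < eta k) ->
  forall k, (k <= K)%N ->
  \sum_(1 <= j < k.+1) 2 * eta j * (G (sgd_start proj g z pi eta x1 j.-1) - G xs)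
    + sq (sgd_start proj g z pi eta x1 k - xs)
  <= sq (x1 - xs) + L ^+ 2 * n%:R ^+ 2 * \sum_(1 <= j < k.+1) eta j ^+ 2.
Proof.
move=> X1 Xs he; elim=> [|k IH] hk.
  by rewrite !big_geq //= add0r mulr0 addr0.
have hk' : (k <= K)%N by apply: ltnW.
have e0 : 0 <= eta k.+1 by apply/ltW/he; rewrite hk.
have Xk := start_in X1 he hk'.
have [_ h] := @epoch (eta k.+1) (sgd_start proj g z pi eta x1 k) xs e0 Xk Xs.
have IHk := IH hk'.
rewrite big_nat_recr //= [in X in _ <= X]big_nat_recr //=.
lra.
Qed.

Lemma wavg_in (w : nat -> R) (p : nat -> 'rV[R]_d) N : (0 < N)%N ->
  (forall k, (1 <= k <= N)%N -> 0 < w k /\ X (p k)) ->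
  0 < (\sum_(1 <= k < N.+1) w k) /\
  X ((\sum_(1 <= k < N.+1) w k)^-1 *: \sum_(1 <= k < N.+1) w k *: p k).
Proof.
elim: N => [//|N IH] _ h.
have [w0 Xp] := h N.+1 (leqnn _).
case: (posnP N) => [N0|Npos].
  subst N; rewrite !big_nat1 scalerA mulVf ?gt_eqF // scale1r; split => //.
have [S0 XS] : 0 < (\sum_(1 <= k < N.+1) w k) /\
  X ((\sum_(1 <= k < N.+1) w k)^-1 *: \sum_(1 <= k < N.+1) w k *: p k).
  by apply: IH => // k /andP[k1 kN]; apply: h; rewrite k1 /= ltnW.
rewrite big_nat_recr //= [in X in _ *: X]big_nat_recr //=.
set S := \sum_(1 <= k < N.+1) w k in S0 XS *.
set V := \sum_(1 <= k < N.+1) w k *: p k in XS *.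
have Sw : 0 < S + w N.+1 by rewrite addr_gt0.
split => //.
have -> : (S + w N.+1)^-1 *: (V + w N.+1 *: p N.+1) =
   (S / (S + w N.+1)) *: (S^-1 *: V) + (1 - S / (S + w N.+1)) *: p N.+1.
  apply/rowP => i; rewrite !mxE; field.
  by rewrite !gt_eqF.
apply: convX => //.
apply/andP; split; first by rewrite divr_ge0 // ltW.
by rewrite ler_pdivrMr // mul1r lerDl ltW.
Qed.

Lemma jensen (w : nat -> R) (p : nat -> 'rV[R]_d) N avg :
  (forall k, (1 <= k <= N)%N -> 0 <= w k /\ X (p k)) -> X avg ->
  \sum_(1 <= k < N.+1) w k != 0 ->
  avg = (\sum_(1 <= k < N.+1) w k)^-1 *: \sum_(1 <= k < N.+1) w k *: p k ->
  (\sum_(1 <= k < N.+1) w k) * G avg <= \sum_(1 <= k < N.+1) w k * G (p k).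
Proof.
move=> h Xa S0 ea.
set S := \sum_(1 <= k < N.+1) w k in S0 ea *.
have hi zz : S * f avg zz <= \sum_(1 <= k < N.+1) w k * f (p k) zz.
  have : \sum_(1 <= k < N.+1) w k * (f avg zz + dotv (g avg zz) (p k - avg))
      <= \sum_(1 <= k < N.+1) w k * f (p k) zz.
    rewrite big_nat_cond [X in _ <= X]big_nat_cond.
    apply: ler_sum => k /andP[/andP[k1 kN] _].
    have [w0 Xp] : 0 <= w k /\ X (p k) by apply: h; rewrite k1 -ltnS.
    by apply: ler_wpM2l => //; apply: hsub.
  have -> : \sum_(1 <= k < N.+1) w k * (f avg zz + dotv (g avg zz) (p k - avg))
    = S * f avg zz + dotv (g avg zz) (\sum_(1 <= k < N.+1) w k *: (p k - avg)).
    rewrite dotv_sumr /S mulr_suml -big_split /=.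
    by apply: eq_bigr => k _; rewrite dotvZr mulrDr.
  have -> : \sum_(1 <= k < N.+1) w k *: (p k - avg) = 0.
    under eq_bigr do rewrite scalerBr.
    by rewrite sumrB -scaler_suml -/S ea scalerA divff // scale1r subrr.
  by rewrite dotv0r addr0.
rewrite /G mulr_sumr.
under [X in _ <= X]eq_bigr do rewrite /G mulr_sumr.
rewrite (exchange_big _ _ _ _ _ (fun k i => w k * f (p k) (z i))) /=.
by apply: ler_sum => i _; apply: hi.
Qed.


Lemma main_sec (xstar x1 : 'rV[R]_d) (K : nat) (eta : nat -> R) :
  X xstar -> X x1 -> (0 < K)%N -> (forall k, (1 <= k <= K)%N -> 0 < eta k) ->
  emp_risk f z (sgd_avg proj g z pi eta x1 K) - emp_risk f z xstar <=
    enorm (x1 - xstar) ^+ 2 / (2 * n%:R * \sum_(1 <= k < K.+1) eta k)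
    + L ^+ 2 * (n%:R + 2) / 2 *
      ((\sum_(1 <= k < K.+1) eta k ^+ 2) / \sum_(1 <= k < K.+1) eta k).
Proof.
move=> Xs X1 K0 he.
have hp k : (1 <= k <= K)%N ->
    0 < eta k /\ X ((fun k => sgd_start proj g z pi eta x1 k.-1) k).
  move=> /andP[k1 kK]; split; first by apply: he; rewrite k1 kK.
  by apply: (start_in X1 he); apply: leq_trans kK; apply: leq_pred.
have [S0 Xa] := wavg_in K0 hp.
have hp' k : (1 <= k <= K)%N ->
    0 <= eta k /\ X ((fun k => sgd_start proj g z pi eta x1 k.-1) k).
  by move=> hk; have [h1 h2] := hp k hk; split => //; apply: ltW.
have hJ := jensen hp' Xa (negbT (gt_eqF S0)) erefl.
have hT := telescope X1 Xs he (leqnn K).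
rewrite /= -/(sgd_avg proj g z pi eta x1 K) in hJ.
set avg := sgd_avg proj g z pi eta x1 K in hJ *.
set S := \sum_(1 <= k < K.+1) eta k in S0 hJ hT *.
set Q := \sum_(1 <= k < K.+1) eta k ^+ 2 in hT *.
have Q0 : 0 <= Q by rewrite /Q sumr_ge0 // => k _; apply: sqr_ge0.
have -> : emp_risk f z avg = n%:R^-1 * G avg by [].
have -> : emp_risk f z xstar = n%:R^-1 * G xstar by [].
rewrite enorm_sq.
have sqK := sq_ge0 (sgd_start proj g z pi eta x1 K - xstar).
have e : \sum_(1 <= j < K.+1) 2 * eta j * (G (sgd_start proj g z pi eta x1 j.-1) - G xstar)
   = 2 * (\sum_(1 <= k < K.+1) eta k * G (sgd_start proj g z pi eta x1 k.-1)) - 2 * (S * G xstar).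
  rewrite /S mulr_suml !mulr_sumr -sumrB.
  by apply: eq_bigr => k _; ring.
rewrite e in hT.
have L2Q : 0 <= L ^+ 2 * Q by rewrite mulr_ge0 // sqr_ge0.
case: (posnP n) => [n0|npos].
  rewrite /G; move: (z) pi; rewrite n0 => z' pi'.
  rewrite !big_ord0 !mulr0 subrr mul0r invr0 mulr0 add0r.
  rewrite add0r; apply: mulr_ge0; last by apply: divr_ge0 => //; apply: ltW.
  by apply: divr_ge0 => //; apply: mulr_ge0 => //; apply: sqr_ge0.
set N := (n%:R : R).
have N0 : 0 < N by rewrite /N ltr0n.
set D := sq (x1 - xstar) in hT *.
have D0 : 0 <= D := sq_ge0 _.
set Ga := G avg in hJ *; set Gs := G xstar in hT *.
set W := \sum_(1 <= k < K.+1) eta k * G (sgd_start proj g z pi eta x1 k.-1) in hJ hT.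
rewrite -subr_ge0.
have -> : D / (2 * N * S) + L ^+ 2 * (N + 2) / 2 * (Q / S) - (N^-1 * Ga - N^-1 * Gs)
   = (D + L ^+ 2 * Q * N * (N + 2) - 2 * S * (Ga - Gs)) / (2 * N * S).
  by field; rewrite !gt_eqF.
apply: divr_ge0; last by rewrite !mulr_ge0 // ltW.
have h3 : 0 <= L ^+ 2 * Q * N by rewrite mulr_ge0 // ltW.
nra.
Qed.

End Main.

Unset Implicit Arguments.

Theorem corollaryC2 (R : realType) (d : nat) (X : set 'rV[R]_d) (Z : Type)
  (f : 'rV[R]_d -> Z -> R) (g : 'rV[R]_d -> Z -> 'rV[R]_d) (L : R)
  (n : nat) (z : 'I_n -> Z) (xstar : 'rV[R]_d)
  (proj : 'rV[R]_d -> 'rV[R]_d) (pi : 'S_n) (K : nat) (eta : nat -> R)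
  (x1 : 'rV[R]_d) :
  closed X -> convex_set X ->
  (forall y, is_proj X y (proj y)) ->
  (forall zz, convex_on X (fun x => f x zz)) ->
  (exists U : set 'rV[R]_d, open U /\ X `<=` U /\
     forall zz x y, U x -> U y -> `|f x zz - f y zz| <= L * enorm (x - y)) ->
  (forall zz x y, X x -> X y -> f y zz >= f x zz + dotv (g x zz) (y - x)) ->
  (forall zz x, X x -> enorm (g x zz) <= L) ->
  X xstar -> (forall x, X x -> emp_risk f z xstar <= emp_risk f z x) ->
  X x1 -> (0 < K)%N -> (forall k, (1 <= k <= K)%N -> 0 < eta k) ->
  emp_risk f z (sgd_avg proj g z pi eta x1 K) - emp_risk f z xstar <=
    enorm (x1 - xstar) ^+ 2 / (2 * n%:R * \sum_(1 <= k < K.+1) eta k)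
    + L ^+ 2 * (n%:R + 2) / 2 *
      ((\sum_(1 <= k < K.+1) eta k ^+ 2) / \sum_(1 <= k < K.+1) eta k).
Proof.
move=> _ cX hproj _ _ hsub hgL Xs _ X1 K0 he.
exact: (main_sec z pi cX hproj hsub hgL Xs X1 K0 he).
Qed.
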